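(* Let $T$ be a (finite) tree with an even number of vertices. Then there exists a labeling $f:E(T)\to\{-1,+1\}$ such that $|e_f(-1)-e_f(1)|=1$, $|f(v)|\le 1$ for every vertex $v$ of $T$, and $|v_f(-1)-v_f(1)|=2$.
   Context: Given a labeling $f:E(T)\to\{-1,+1\}$, for each vertex $v$ define $f(v)=\sum_{e\in I(v)} f(e)$, where $I(v)$ is the set of edges incident to $v$. For an integer $c$, $e_f(c)$ denotes the number of edges with label $c$, and $v_f(c)$ the number of vertices $v$ with $f(v)=c$. *)

(* Defs.v *)
From mathcomp Require Import all_boot all_order all_algebra.
Set Implicit Arguments. Unset Strict Implicit. Unset Printing Implicit Defensive.
Import GRing.Theory Num.Theory.

Definition simple_graph (T : finType) (e : rel T) : Prop :=
  symmetric e /\ irreflexive e.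

Definition connected_graph (T : finType) (e : rel T) : Prop :=
  forall x y : T, connect e x y.

Definition acyclic_graph (T : finType) (e : rel T) : Prop :=
  forall c : seq T, uniq c -> 3 <= size c -> ~~ cycle e c.

Definition is_tree (T : finType) (e : rel T) : Prop :=
  [/\ simple_graph e, 0 < #|T|, connected_graph e & acyclic_graph e].

Definition edges (T : finType) (e : rel T) : {set {set T}} :=
  [set [set x; y] | x in T, y in T & e x y].

(* f(v) = sum of the labels of the edges incident to v *)
Definition vlabel (T : finType) (e : rel T) (f : {set T} -> int) (v : T) : int :=
  (\sum_(a in edges e | v \in a) f a)%R.

Definition e_f (T : finType) (e : rel T) (f : {set T} -> int) (c : int) : nat :=
  #|[set a in edges e | f a == c]|.

Definition v_f (T : finType) (e : rel T) (f : {set T} -> int) (c : int) : nat :=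
  #|[set v : T | vlabel e f v == c]|.

(* Main.v *)
Require Import Defs.
From mathcomp Require Import all_boot all_order all_algebra.
From mathcomp Require Import zify.
Import GRing.Theory Num.Theory.
Set Implicit Arguments. Unset Strict Implicit. Unset Printing Implicit Defensive.

Module Claim.

Section Claim.
Variables (T : finType) (r : T) (par : T -> T) (h : T -> nat).
Hypothesis hp : forall v, v != r -> (h (par v) < h v)%N.
Hypothesis hr : h r = 0%N.

Local Open Scope ring_scope.

Definition lab (V : {set T}) (g : T -> int) (u : T) : int :=
  (if u != r then g u else 0) + \sum_(c in V) (if (c != r) && (par c == u) then g c else 0).

Definition tot (V : {set T}) (g : T -> int) : int :=
  \sum_(c in V) (if c != r then g c else 0).

Definition closedV (V : {set T}) := r \in V /\ forall v, v \in V -> v != r -> par v \in V.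

Lemma h0 v : (h v == 0)%N = (v == r).
Proof.
case: (v =P r) => [->|/eqP vr]; first by rewrite hr eqxx.
by have := hp vr; case: (h v).
Qed.

Lemma par_neq v : v != r -> par v != v.
Proof. move=> vr; apply/eqP=> E; have := hp vr; by rewrite E ltnn. Qed.

Lemma absadj (z : int) : `|z| <= 1 -> `|z + (if z == 1 then -1 else 1)| <= 1.
Proof. by case: eqP => H; lia. Qed.

Lemma claim n : forall V : {set T}, (#|V| <= n)%N -> closedV V -> ~~ odd #|V| ->
  exists g : T -> int, (forall v, g v = 1 \/ g v = -1) /\
    (forall u, u \in V -> `|lab V g u| <= 1) /\ `|tot V g| = 1.
Proof.
elim: n => [|n IH] V HVn [rV clV] Hodd.
  by move: HVn; rewrite leqn0 cards_eq0 => /eqP V0; rewrite V0 inE in rV.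
have Vcard := cardsD1 r V; rewrite rV in Vcard.
case: (#|V| =P 2%N) => [V2|Vn2].
  have /cards1P [x Vx] : #|V :\ r| == 1%N by rewrite V2 in Vcard; case: Vcard => ->.
  have : x \in V :\ r by rewrite Vx set11.
  rewrite in_setD1 => /andP [xr xV].
  have pxr : par x = r.
    apply/eqP; apply: contraT => pxr.
    have : par x \in V :\ r by rewrite in_setD1 pxr clV.
    by rewrite Vx in_set1 (negbTE (par_neq xr)).
  exists (fun _ => 1); split; first by left.
  split.
    move=> u uV; rewrite /lab (big_setD1 r) //= eqxx /= Vx big_set1 pxr add0r xr.
    case: (u =P r) => [->|/eqP ur]; first by rewrite eqxx.
    have : u \in V :\ r by rewrite in_setD1 ur.
    rewrite Vx in_set1 => /eqP ->; rewrite eq_sym (negbTE xr). by [].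
  by rewrite /tot (big_setD1 r) //= eqxx /= Vx big_set1 xr.
have V4 : (4 <= #|V|)%N.
  have : (0 < #|V|)%N by rewrite Vcard.
  move: Hodd Vn2; case: #|V| => [|[|[|[|k]]]] //.
have [x0 x0V] : exists x0, x0 \in V :\ r.
  by apply/card_gt0P; move: V4; rewrite Vcard; case: #|V :\ r|.
move: x0V; rewrite in_setD1 => /andP [x0r x0V].
pose C := [set q in V | [exists c in V, (c != r) && (par c == q)]].
have Cx0 : par x0 \in C.
  rewrite inE clV //=; apply/existsP; exists x0; by rewrite x0V x0r eqxx.
have [p pC pmax] := @arg_maxnP T (par x0) (fun q => q \in C) h Cx0.
move: (pC); rewrite inE => /andP [pV /existsP [c0 /and3P [c0V c0r /eqP c0p]]].
pose K := [set c in V | (c != r) && (par c == p)].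
have inK c : (c \in K) = [&& c \in V, c != r & par c == p] by rewrite inE.
have nochild c d : c \in K -> d \in V -> d != r -> par d != c.
  rewrite inK => /and3P [cV cr /eqP cp] dV dr; apply/eqP => dc.
  have : c \in C by rewrite inE cV; apply/existsP; exists d; rewrite dV dr dc eqxx.
  by move/pmax => /= ge; have := hp cr; rewrite cp ltnNge ge.
have labK g c : c \in K -> lab V g c = g c.
  move=> cK; have : c != r by move: cK; rewrite inK => /and3P [].
  move=> cr; rewrite /lab cr big1 ?addr0 // => d dV.
  case: (d =P r) => [->|/eqP dr]; first by rewrite ?eqxx.
  by rewrite (negbTE (nochild _ _ cK dV dr)) andbF.
have c0K : c0 \in K by rewrite inK c0V c0r c0p eqxx.
have [HK|HK] := ltnP 1 #|K|.
  have [x1 x1K] : exists x1, x1 \in K by exists c0.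
  have [x2 x2K'] : exists x2, x2 \in K :\ x1.
    by apply/card_gt0P; move: HK; rewrite (cardsD1 x1 K) x1K add1n ltnS.
  move: (x2K'); rewrite in_setD1 => /andP [x21 x2K].
  move: (x1K) (x2K); rewrite !inK => /and3P [x1V x1r /eqP x1p] /and3P [x2V x2r /eqP x2p].
  pose V' := V :\ x1 :\ x2.
  have inV' c : (c \in V') = [&& c != x2, c != x1 & c \in V] by rewrite !in_setD1.
  have cardV : #|V| = (#|V'| + 2)%N.
    by rewrite (cardsD1 x1 V) x1V (cardsD1 x2 (V :\ x1)) in_setD1 x21 x2V /= add1n add1n addn2.
  have clV' : closedV V'.
    split; first by rewrite inV' rV andbT eq_sym x2r eq_sym x1r.
    move=> v; rewrite inV' => /and3P [v2 v1 vV] vr.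
    by rewrite inV' clV // andbT nochild // nochild.
  have [g' [g'pm [g'lab g'tot]]] : exists g' : T -> int, (forall v, g' v = 1 \/ g' v = -1) /\
    (forall u, u \in V' -> `|lab V' g' u| <= 1) /\ `|tot V' g' | = 1.
    apply: IH => //; first by move: HVn; rewrite cardV addn2 ltnS => /ltnW.
    by move: Hodd; rewrite cardV addn2 /= negbK.
  pose g v := if v == x1 then 1 else if v == x2 then -1 else g' v.
  have gx1 : g x1 = 1 by rewrite /g eqxx.
  have gx2 : g x2 = -1 by rewrite /g eqxx (negbTE x21).
  have gV' c : c \in V' -> g c = g' c.
    by rewrite inV' => /and3P [c2 c1 _]; rewrite /g (negbTE c1) (negbTE c2).
  exists g; split.
    by move=> v; rewrite /g; case: eqP => _; [left|case: eqP => _; [right|apply: g'pm]].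
  split.
    move=> u uV.
    case: (u =P x1) => [->|/eqP u1]; first by rewrite labK // gx1.
    case: (u =P x2) => [->|/eqP u2]; first by rewrite labK // gx2.
    have uV' : u \in V' by rewrite inV' u1 u2 uV.
    have -> : lab V g u = lab V' g' u.
      rewrite /lab (big_setD1 x1) // (big_setD1 x2) ?in_setD1 ?x21 //.
      rewrite x1r x2r x1p x2p gx1 gx2 /= (gV' _ uV').
      rewrite (eq_bigr (fun c => if (c != r) && (par c == u) then g' c else 0)); last first.
        by move=> c cV'; rewrite gV'.
      by case: (p == u); rewrite ?add0r ?addNKr.
    exact: g'lab.
  have -> : tot V g = tot V' g'.
    rewrite /tot (big_setD1 x1) // (big_setD1 x2) ?in_setD1 ?x21 //.
    rewrite x1r x2r gx1 gx2 /=.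
    rewrite (eq_bigr (fun c => if (c != r) then g' c else 0)); last first.
      by move=> c cV'; rewrite gV'.
    by rewrite addNKr.
  exact: g'tot.
have /cards1P [x Kx] : #|K| == 1%N.
  by rewrite eqn_leq HK /=; apply/card_gt0P; exists c0.
have xK : x \in K by rewrite Kx set11.
move: (xK); rewrite inK => /and3P [xV xr /eqP xp].
have Kchar c : c \in V -> c != r -> par c = p -> c = x.
  by move=> cV cr cp; apply/set1P; rewrite -Kx inK cV cr cp eqxx.
case: (p =P r) => [pr|/eqP pr].
  have : V \subset [set r; x].
    apply/subsetP => v vV; rewrite !inE.
    case: (v =P r) => [->|/eqP vr]; first by [].
    have pvC : par v \in C.
      rewrite inE clV //=; apply/existsP; exists v; by rewrite vV vr eqxx.
    have := pmax _ pvC; rewrite /= pr hr leqn0 h0 => /eqP pvr.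
    have pv : par v = p by rewrite pvr pr.
    by rewrite (Kchar v vV vr pv) eqxx.
  move/subset_leq_card; rewrite cards2 => H.
  by have := leq_trans V4 H; case: (r != x).
have px : p != x.
  by apply/eqP => E; have := hp xr; rewrite xp E ltnn.
have wV : par p \in V by exact: clV.
pose V' := V :\ x :\ p.
have inV' c : (c \in V') = [&& c != p, c != x & c \in V] by rewrite !in_setD1.
have cardV : #|V| = (#|V'| + 2)%N.
  by rewrite (cardsD1 x V) xV (cardsD1 p (V :\ x)) in_setD1 px pV /= add1n add1n addn2.
have clV' : closedV V'.
  split; first by rewrite inV' rV andbT eq_sym pr eq_sym xr.
  move=> v; rewrite inV' => /and3P [vp vx vV] vr.
  rewrite inV' clV // andbT (nochild x v xK vV vr) andbT.
  by apply/eqP => E; move: vx; rewrite (Kchar v vV vr E) eqxx.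
have wV' : par p \in V' by rewrite inV' wV andbT (par_neq pr) (nochild x p xK pV pr).
have [g' [g'pm [g'lab g'tot]]] : exists g' : T -> int, (forall v, g' v = 1 \/ g' v = -1) /\
  (forall u, u \in V' -> `|lab V' g' u| <= 1) /\ `|tot V' g' | = 1.
  apply: IH => //; first by move: HVn; rewrite cardV addn2 ltnS => /ltnW.
  by move: Hodd; rewrite cardV addn2 /= negbK.
pose a : int := if lab V' g' (par p) == 1 then -1 else 1.
have apm : a = 1 \/ a = -1 by rewrite /a; case: ifP; [right|left].
pose g v := if v == x then - a else if v == p then a else g' v.
have gx : g x = - a by rewrite /g eqxx.
have gp : g p = a by rewrite /g eqxx (negbTE px).
have gV' c : c \in V' -> g c = g' c.
  by rewrite inV' => /and3P [cp cx _]; rewrite /g (negbTE cx) (negbTE cp).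
exists g; split.
  move=> v; rewrite /g; case: eqP => _.
    by case: apm => ->; [right|left; rewrite opprK].
  by case: eqP => _; [exact: apm | exact: g'pm].
split.
  move=> u uV.
  case: (u =P x) => [->|/eqP ux].
    by rewrite labK // gx normrN; case: apm => ->.
  case: (u =P p) => [->|/eqP up].
    rewrite /lab pr /= gp (big_setD1 x) // xr xp eqxx /= gx big1 ?addr0 ?addrN //.
    move=> c; rewrite in_setD1 => /andP [cx cV].
    case: (c =P r) => [->|/eqP cr]; first by rewrite ?eqxx.
    case: (par c =P p) => [E|_]; last by rewrite andbF.
    by move: cx; rewrite (Kchar c cV cr E) eqxx.
  have uV' : u \in V' by rewrite inV' up ux uV.
  have pu : (p == u) = false by rewrite eq_sym (negbTE up).
  have -> : lab V g u = lab V' g' u + (if par p == u then a else 0).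
    rewrite /lab (big_setD1 x) // (big_setD1 p) ?in_setD1 ?px //.
    rewrite xr xp pu pr gp /= (gV' _ uV').
    rewrite (eq_bigr (fun c => if (c != r) && (par c == u) then g' c else 0)); last first.
      by move=> c cV'; rewrite gV'.
    by rewrite add0r addrCA [RHS]addrC addrA.
  case: (par p =P u) => [<-|_]; last by rewrite addr0; exact: g'lab.
  exact: absadj (g'lab _ wV').
have -> : tot V g = tot V' g'.
  rewrite /tot (big_setD1 x) // (big_setD1 p) ?in_setD1 ?px // xr pr gx gp /=.
  rewrite (eq_bigr (fun c => if (c != r) then g' c else 0)); last by move=> c cV'; rewrite gV'.
  by rewrite addKr.
exact: g'tot.
Qed.

End Claim.

End Claim.
Import Claim.

Module G.

Section Graph.
Variables (T : finType) (e : rel T) (r : T).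
Hypothesis sym : symmetric e.
Hypothesis irr : irreflexive e.
Hypothesis conn : forall y, connect e r y.
Hypothesis acyc : forall c : seq T, uniq c -> (3 <= size c)%N -> ~~ cycle e c.

Definition Pn v n := [exists p : n.-tuple T, path e r p && (last r p == v)].

Lemma exPn v : exists n, Pn v n.
Proof.
have /connectP [p pp pl] := conn v.
exists (size p); apply/existsP; exists (in_tuple p); by rewrite /= pp -pl eqxx.
Qed.

Definition hh v := ex_minn (exPn v).

Lemma hP v : exists p, [/\ path e r p, last r p = v & size p = hh v].
Proof.
rewrite /hh; case: ex_minnP => n /existsP [p /andP [pp /eqP pl]] _.
by exists p; split => //; rewrite size_tuple.
Qed.

Lemma hmin v p : path e r p -> last r p = v -> hh v <= size p.
Proof.
move=> pp pl; rewrite /hh; case: ex_minnP => n _ H; apply: H.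
apply/existsP; exists (in_tuple p); by rewrite /= pp pl eqxx.
Qed.

Lemma hr : hh r = 0.
Proof. by apply/eqP; rewrite -leqn0; apply: (@hmin r [::]). Qed.

Lemma hedge u v : e u v -> hh v <= (hh u).+1.
Proof.
have [p [pp pl ps]] := hP u => euv.
have := @hmin v (rcons p v); rewrite size_rcons ps; apply.
  by rewrite rcons_path pp pl euv.
by rewrite last_rcons.
Qed.

Lemma hpar_ex v : v != r -> exists y, e y v && (hh y < hh v).
Proof.
have [p [pp pl ps]] := hP v.
case/lastP: p pp pl ps => [|q y] pp pl ps; first by rewrite -pl /= eqxx.
rewrite last_rcons in pl; subst y => _.
exists (last r q); move: pp; rewrite rcons_path => /andP [pq ->] /=.
by have := hmin pq erefl; rewrite -ps size_rcons.
Qed.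

Definition par v := if [pick y | e y v && (hh y < hh v)] is Some y then y else r.

Lemma parP v : v != r -> e (par v) v /\ hh (par v) < hh v.
Proof.
move=> vr; rewrite /par; case: pickP => [y /andP [] //|H].
have [y Hy] := hpar_ex vr; by rewrite H in Hy.
Qed.

Lemma hpar v : v != r -> hh (par v) < hh v.
Proof. by case/parP. Qed.

Lemma hpar_exact v : v != r -> (hh (par v)).+1 = hh v.
Proof.
move=> vr; have [epv lt] := parP vr; have := hedge epv.
move: lt; clear; lia.
Qed.

Lemma hh0 v : hh v = 0 -> v = r.
Proof.
move=> H; apply/eqP; apply: contraT => vr; have := hpar vr; by rewrite H.
Qed.

Lemma up n w : hh w <= n -> exists p, [/\ path e w p, last w p = r & all (fun y => hh y < hh w) p].
Proof.
elim: n w => [|n IH] w hw.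
  by exists [::]; rewrite (hh0 (v:=w)) //; move: hw; rewrite leqn0 => /eqP.
case: (w =P r) => [->|/eqP wr]; first by exists [::].
have [epw lt] := parP wr.
have [p [pp pl pa]] := IH (par w) (leq_trans lt hw).
exists (par w :: p); split => /=.
- by rewrite pp andbT sym.
- exact: pl.
- rewrite lt /=; apply: sub_all pa => y /= H; exact: ltn_trans H lt.
Qed.

Lemma down n w : hh w <= n -> exists q, [/\ path e r q, last r q = w & all (fun y => hh y <= hh w) q].
Proof.
elim: n w => [|n IH] w hw.
  by exists [::]; rewrite (hh0 (v:=w)) //; move: hw; rewrite leqn0 => /eqP.
case: (w =P r) => [->|/eqP wr]; first by exists [::].
have [epw lt] := parP wr.
have [p [pp pl pa]] := IH (par w) (leq_trans lt hw).
exists (rcons p w); split.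
- by rewrite rcons_path pp pl epw.
- by rewrite last_rcons.
- rewrite all_rcons leqnn /=; apply: sub_all pa => y /= H; exact: ltnW (leq_ltn_trans H lt).
Qed.

Lemma edge_par u v : e u v -> (v != r /\ par v = u) \/ (u != r /\ par u = v).
Proof.
move=> euv.
case: (boolP ((v != r) && (par v == u))) => [/andP [vr /eqP pv]|H1]; first by left.
case: (boolP ((u != r) && (par u == v))) => [/andP [ur /eqP pu]|H2]; first by right.
exfalso.
have evu : e v u by rewrite sym.
have uv : u != v by apply/eqP => E; move: euv; rewrite E irr.
have hvu := hedge euv; have huv := hedge evu.
case: (v =P r) => [vr0|/eqP vr].
  have ur : u != r by rewrite -vr0.
  have := hpar_exact ur; move: huv; rewrite vr0 hr => huv hpu.
  have /hh0 pur : hh (par u) = 0 by move: huv hpu; clear; lia.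
  by move: H2; rewrite ur pur vr0 eqxx.
case: (u =P r) => [ur0|/eqP ur].
  have := hpar_exact vr; move: hvu; rewrite ur0 hr => hvu hpv.
  have /hh0 pvr : hh (par v) = 0 by move: hvu hpv; clear; lia.
  by move: H1; rewrite vr pvr ur0 eqxx.
rewrite vr /= in H1; rewrite ur /= in H2.
have [p1 [pp1 pl1 pa1]] := up (leqnn (hh (par u))).
have [q [pq pl2 pa2]] := down (leqnn (hh (par v))).
pose W := (par u :: p1) ++ q.
have pW : path e u W.
  rewrite cat_path /= pp1 pl1 pq !andbT sym; by case: (parP ur).
have lW : last u W = par v by rewrite last_cat /= pl1 pl2.
have vW : v \notin W.
  apply/negP; rewrite mem_cat inE => /orP [/orP [/eqP E| vp1] | vq].
  - by move: H2; rewrite E eqxx.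
  - have := allP pa1 v vp1; have := hpar_exact ur; move: huv; clear; lia.
  - have := allP pa2 v vq; have := hpar vr; clear; lia.
move: lW; case: (shortenP pW) => p' pp' up' sub lW.
have : ~~ cycle e (v :: u :: p').
  apply: acyc.
    rewrite cons_uniq up' andbT inE negb_or eq_sym uv /=.
    by apply/negP => /sub; apply/negP.
  case: p' {pp' up' sub} lW => [/= E|]; last by [].
  by move: H1; rewrite E eqxx.
rewrite /= rcons_path pp' lW (proj1 (parP vr)) sym euv.
by [].
Qed.

End Graph.

End G.
Import G.

Module FinalM.

Local Open Scope ring_scope.

Lemma sum_bool (T : finType) (P : pred T) : \sum_v ((P v : nat)%:Z) = #|[set v | P v]|%:Z.
Proof.
rewrite (eq_bigr (fun v => if P v then 1 else 0)); last by move=> v _; case: (P v).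
by rewrite -big_mkcond sumr_const cardsE natz.
Qed.

Lemma sum_count (T : finType) (F : T -> int) : (forall v, `|F v| <= 1) ->
  \sum_v F v = #|[set v | F v == 1]|%:Z - #|[set v | F v == -1]|%:Z.
Proof.
move=> HF.
rewrite (eq_bigr (fun v => ((F v == 1) : nat)%:Z - ((F v == -1) : nat)%:Z)); last first.
  move=> v _; have := HF v; case: eqP => [->|H1]; first by [].
  case: eqP => [->|H2]; first by [].
  move=> H /=; lia.
by rewrite sumrB !sum_bool.
Qed.

Lemma arith (s a b : int) : s + s = a - b -> `|s| = 1 -> `|b - a| = 2.
Proof. lia. Qed.

Section Final.
Variables (T : finType) (e : rel T) (r : T).
Hypothesis sym : symmetric e.
Hypothesis irr : irreflexive e.
Hypothesis conn : forall y, connect e r y.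
Hypothesis acyc : forall c : seq T, uniq c -> (3 <= size c)%N -> ~~ cycle e c.

Local Notation par := (G.par conn).
Local Notation hh := (G.hh conn).

Lemma final : ~~ odd #|T| ->
  exists f : {set T} -> int,
    [/\ (forall a, a \in edges e -> f a = 1%R \/ f a = (-1)%R),
        `|(e_f e f (-1)%R)%:Z - (e_f e f 1%R)%:Z|%R = 1%R,
        (forall v : T, (`|vlabel e f v| <= 1)%R)
      & `|(v_f e f (-1)%R)%:Z - (v_f e f 1%R)%:Z|%R = 2%R].
Proof.
move=> Hodd.
have hp : forall v, v != r -> (hh (par v) < hh v)%N by move=> v; exact: hpar.
have closedT : closedV r par setT by split => // v; rewrite !in_setT.
have := @claim T r par hh hp (hr conn) #|T| setT; rewrite cardsT.
move=> /(_ (leqnn _) closedT Hodd) [g [gpm [glab gtot]]].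
pose S := [set v | v != r].
pose phi v := [set v; par v].
have phiinj : {in S &, injective phi}.
  move=> u v; rewrite !inE => ur vr E.
  have : u \in phi v by rewrite -E !inE eqxx.
  rewrite !inE => /orP [/eqP //|/eqP upv].
  have : v \in phi u by rewrite E !inE eqxx.
  rewrite !inE => /orP [/eqP -> //|/eqP vpu].
  have := hp _ ur; have := hp _ vr; rewrite -upv -vpu => H1 H2.
  by have := ltn_trans H1 H2; rewrite ltnn.
have Eedges : edges e = phi @: S.
  apply/setP => a; apply/idP/idP.
    case/imset2P => x y _; rewrite inE => /andP [_ exy] ->.
    case: (edge_par sym irr conn acyc exy) => [[yr pyx]|[xr pxy]].
      by apply/imsetP; exists y; [rewrite inE | rewrite /phi pyx setUC].
    by apply/imsetP; exists x; [rewrite inE | rewrite /phi pxy].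
  case/imsetP => v; rewrite inE => vr ->.
  apply/imset2P; exists (par v) v => //; last by rewrite /phi setUC.
  by rewrite inE; case: (parP conn vr).
pose f a := \sum_(v in S | phi v == a) g v.
have fphi v : v \in S -> f (phi v) = g v.
  move=> vS; rewrite /f (big_pred1 v) // => u /=.
  apply/andP/eqP => [[uS /eqP E]|->]; [exact: phiinj | by rewrite vS eqxx].
have vl v : vlabel e f v = lab r par setT g v.
  rewrite /vlabel Eedges big_mkcondr /= big_imset //=.
  rewrite (eq_bigr (fun u => (if u == v then g u else 0) + (if par u == v then g u else 0))); last first.
    move=> u uS; have ur : u != r by move: uS; rewrite inE.
    rewrite fphi // !inE.
    case: (u =P v) => [<-|/eqP uv].
      by rewrite eqxx /= (negbTE (par_neq hp ur)) addr0.
    by rewrite eq_sym (negbTE uv) /= [v == _]eq_sym add0r.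
  rewrite big_split /lab; congr (_ + _).
    rewrite -big_mkcondr; case: (v =P r) => [->|/eqP vr].
      by rewrite big_pred0 // => u; rewrite inE; case: eqP.
    rewrite /= (big_pred1 v) // => u; rewrite /= inE.
    by case: (u =P v) => [->|_]; [rewrite vr | rewrite andbF].
  rewrite big_mkcond [RHS]big_mkcond; apply: eq_bigr => c _; rewrite !inE.
  by case: (c != r).
pose G v := if v != r then g v else 0.
have tsum : tot r setT g = \sum_v G v.
  by rewrite /tot; apply: eq_bigl => v; rewrite in_setT.
have Gb v : `|G v| <= 1 by rewrite /G; case: ifP => _ //; case: (gpm v) => ->.
have ef c : c != 0 -> e_f e f c = #|[set v | G v == c]|.
  move=> c0; rewrite /e_f.
  have -> : [set a in edges e | f a == c] = phi @: [set v in S | g v == c].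
    apply/setP => a; rewrite inE Eedges; apply/andP/imsetP.
      case=> /imsetP [v vS ->]; rewrite fphi // => gc; exists v => //; by rewrite inE vS.
    case=> v; rewrite inE => /andP [vS gc] ->; split; [exact: imset_f | by rewrite fphi].
  rewrite card_in_imset; last first.
    by move=> u w; rewrite !inE => /andP [? _] /andP [? _]; apply: phiinj; rewrite inE.
  apply: eq_card => v; rewrite !inE /G.
  case: (v =P r) => [->|_] //=.
  by rewrite eq_sym (negbTE c0).
exists f; split.
- move=> a; rewrite Eedges => /imsetP [v vS ->]; rewrite fphi //; exact: gpm.
- move: gtot; rewrite tsum (sum_count Gb) !ef // => H.
  by rewrite distrC.
- move=> v; rewrite vl; exact: glab (in_setT v).
- have vf c : v_f e f c = #|[set v | lab r par setT g v == c]|.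
    by rewrite /v_f; apply: eq_card => v; rewrite !inE vl.
  have Lb v : `|lab r par setT g v| <= 1 by exact: glab (in_setT v).
  have sumL : \sum_v lab r par setT g v = \sum_v G v + \sum_v G v.
    rewrite /lab big_split /=; congr (_ + _).
    rewrite exchange_big; apply: eq_big => [c|c _]; first by rewrite in_setT.
    rewrite /G; case: (c =P r) => [->|/eqP cr] /=.
      by rewrite big1.
    rewrite -big_mkcond (big_pred1 (par c)) // => v /=; exact: eq_sym.
  move: gtot; rewrite tsum => Ht.
  have := sum_count Lb; rewrite sumL !vf => H.
  exact: arith H Ht.
Qed.
End Final.

End FinalM.
Import FinalM.

Theorem proposition1 (T : finType) (e : rel T) :
  is_tree e -> ~~ odd #|T| ->
  exists f : {set T} -> int,
    [/\ (forall a, a \in edges e -> f a = 1%R \/ f a = (-1)%R),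
        `|(e_f e f (-1)%R)%:Z - (e_f e f 1%R)%:Z|%R = 1%R,
        (forall v : T, (`|vlabel e f v| <= 1)%R)
      & `|(v_f e f (-1)%R)%:Z - (v_f e f 1%R)%:Z|%R = 2%R].
Proof.
case=> [[sym irr] Tpos conn acyc] Hodd.
have [r _] := card_gt0P Tpos.
exact: (final sym irr (conn r) acyc Hodd).
Qed.
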